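(* Let $\Omega$ be a set, $q$ a set of operations on $\Omega$ and $\Pi$ a set of similarities on $\Omega$. Then: (1) For every quantifier $Q$ on $\Omega$: $Q\in\mathrm{Inv}(\mathrm{Sim}(q))$ if and only if $Q^{\upharpoonright q}$ is definable in $\mathscr L^-_{\infty\infty}(q)$. For every finitary relation $R$ on $\Omega$: $R\in\mathrm{Inv}(\mathrm{Sim}(q))$ if and only if $R$ is definable in $\mathscr L^-_{\infty\infty}(q)$. (2) $\mathrm{Sim}(\mathrm{Inv}(\Pi))$ is the smallest full monoid of similarities including $\Pi$.
   Context: A similarity on $\Omega$ is a relation $\pi\subseteq\Omega\times\Omega$ such that every $a\in\Omega$ has some $b$ with $a\pi b$, and every $b\in\Omega$ has some $a$ with $a\pi b$. For tuples $\bar a=(a_i)_{i<\alpha}$, $\bar b=(b_i)_{i<\alpha}$, $\bar a\,\pi\,\bar b$ means $a_i\pi b_i$ for all $i$. For $R,S\subseteq\Omega^k$, $R\,\pi\,S$ means: for all $\bar a,\bar b\in\Omega^k$ with $\bar a\pi\bar b$, $\bar a\in R$ iff $\bar b\in S$; for sequences, $\bar R\,\pi\,\bar S$ means $R_i\,\pi\,S_i$ for each $i$. A quantifier on $\Omega$ is a subset of $\mathcal P(\Omega^{k_1})\times\cdots\times\mathcal P(\Omega^{k_l})$ ($l,k_i$ finite); a set of operations is a set of finitary relations and quantifiers on $\Omega$. $\mathscr L^-_{\infty\infty}(q)$ is the equality-free infinitary logic (arbitrary conjunctions/disjunctions, quantification over arbitrary sequences of variables) with a predicate symbol for each relation in $q$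 and a generalized (Lindström) quantifier symbol for each quantifier in $q$, interpreted in $\Omega$: $Q\bar x_1\dots\bar x_l(\phi_1,\dots,\phi_l)$ holds iff the tuple of sets of $k_i$-tuples satisfying $\phi_i$ lies in $Q$. Define $a\sim_q b$ iff for every formula $\phi(x,\bar y)$ of $\mathscr L^-_{\infty\infty}(q)$ and every tuple $\bar c$ from $\Omega$, $\Omega,q\models\phi(a,\bar c)\iff\Omega,q\models\phi(b,\bar c)$. For a set $\Pi$ of similarities, $a\approx_\Pi b$ iff for every finite $k$ and every $\bar c\in\Omega^k$ there is $\pi\in\Pi$ with $(a,\bar c)\,\pi\,(b,\bar c)$. A relation $R\subseteq\Omega^k$ is invariant under $\pi$ (or under an equivalence relation $\sim$, viewed as a similarity) if $\bar a\pi\bar b$ implies ($\bar a\in R\iff\bar b\in R$). Given an equivalence relation $\sim$, a quantifier $Q$ is $\sim$-invariant under $\pi$ if for all $\bar R,\bar S$ of the type of $Q$ with every $R_i,S_i$ invariant under $\sim$ and $\bar R\,\pi\,\bar S$: $\bar R\in Q\iff\bar S\in Q$. $\mathrm{Inv}(\Pi)$ is the set of all relations invariant under every $\pi\in\Pi$ and all quantifiers that are $\approx_\Pi$-invariant under every $\pi\in\Pi$. $\mathrm{Sim}(q)$ is the set of similarities $\pi$ such that every relation in $q$ is invariant under $\pi$ and every quantifier in $q$ is $\sim_q$-invariant under $\pi$. For a quantifier $Q$, $Q^{\upharpoonright q}$ is the set of $(R_1,\dots,R_l)\in Q$ such that each $R_i$ is definable in $\mathscr L^-_{\infty\infty}(q)$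 with parameters from $\Omega$. A relation $R\subseteq\Omega^k$ is definable in $\mathscr L^-_{\infty\infty}(q)$ if some formula $\phi(x_1,\dots,x_k)$ defines it in $(\Omega,q)$; a set $Q'$ of tuples of relations of type $(k_1,\dots,k_l)$ is definable if there is a sentence $\phi(\bar R_1,\dots,\bar R_l)$ of $\mathscr L^-_{\infty\infty}(q)$ expanded with new predicate symbols of arities $k_i$ with $(\Omega,q,R_1,\dots,R_l)\models\phi$ iff $(R_1,\dots,R_l)\in Q'$. A set $\Pi$ of similarities is a monoid with involution if it is closed under relational composition and converses; it is full if moreover $\approx_\Pi\in\Pi$ and $\Pi$ is closed under subsimilarities (if $\pi\in\Pi$ and $\pi'\subseteq\pi$ is a similarity then $\pi'\in\Pi$). *)

(* Defs.v *)
From Stdlib Require Import Fin.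
Set Implicit Arguments.
Unset Strict Implicit.

Definition tup (Om : Type) (k : nat) := Fin.t k -> Om.
Definition rel (Om : Type) (k : nat) := tup Om k -> Prop.
Definition rels (Om : Type) (l : nat) (ar : Fin.t l -> nat) :=
  forall i : Fin.t l, rel Om (ar i).
Definition quant (Om : Type) (l : nat) (ar : Fin.t l -> nat) := rels Om ar -> Prop.

Inductive op (Om : Type) : Type :=
| ORel (k : nat) (R : rel Om k)
| OQuant (l : nat) (ar : Fin.t l -> nat) (Q : quant Om ar).

Definition opset (Om : Type) := op Om -> Prop.
Definition simset (Om : Type) := (Om -> Om -> Prop) -> Prop.

(* Formulas of L^-_{oo oo}(q), expanded with extra predicate symbols E of
   arities ea, with free variables in V.  No equality atom.  Quantification
   binds an arbitrary family W of variables (variables V + W). *)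
Inductive form (Om : Type) (q : opset Om) (E : Type) (ea : E -> nat) : Type -> Type :=
| FRel V (k : nat) (R : rel Om k) (h : q (ORel R)) (xs : Fin.t k -> V) : form q ea V
| FExt V (e : E) (xs : Fin.t (ea e) -> V) : form q ea V
| FNot V (phi : form q ea V) : form q ea V
| FAnd V (I : Type) (phi : I -> form q ea V) : form q ea V
| FOr V (I : Type) (phi : I -> form q ea V) : form q ea V
| FEx V (W : Type) (phi : form q ea (V + W)) : form q ea V
| FAll V (W : Type) (phi : form q ea (V + W)) : form q ea V
| FQ V (l : nat) (ar : Fin.t l -> nat) (Q : quant Om ar) (h : q (OQuant Q))
     (phi : forall i : Fin.t l, form q ea (V + Fin.t (ar i))) : form q ea V.

Definition senv (Om V W : Type) (s : V -> Om) (w : W -> Om) : V + W -> Om :=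
  fun v => match v with inl x => s x | inr y => w y end.

Fixpoint sat (Om : Type) (q : opset Om) (E : Type) (ea : E -> nat)
  (rho : forall e : E, rel Om (ea e)) (V : Type) (phi : form q ea V) {struct phi}
  : (V -> Om) -> Prop :=
  match phi in form _ _ V0 return (V0 -> Om) -> Prop with
  | @FRel _ _ _ _ _ _ R _ xs => fun s => R (fun i => s (xs i))
  | @FExt _ _ _ _ _ e xs => fun s => rho e (fun i => s (xs i))
  | @FNot _ _ _ _ _ psi => fun s => ~ sat rho psi s
  | @FAnd _ _ _ _ _ J psi => fun s => forall i : J, sat rho (psi i) s
  | @FOr _ _ _ _ _ J psi => fun s => exists i : J, sat rho (psi i) s
  | @FEx _ _ _ _ _ W psi => fun s => exists w : W -> Om, sat rho psi (senv s w)
  | @FAll _ _ _ _ _ W psi => fun s => forall w : W -> Om, sat rho psi (senv s w)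
  | @FQ _ _ _ _ _ l ar Q _ psi =>
      fun s => Q (fun i t => sat rho (psi i) (senv s t))
  end.

Definition noext (e : Empty_set) : nat := match e with end.
Definition norho (Om : Type) : forall e : Empty_set, rel Om (noext e) :=
  fun e => match e with end.
Definition fml (Om : Type) (q : opset Om) (V : Type) := form q noext V.
Definition satq (Om : Type) (q : opset Om) (V : Type) (phi : fml q V) (s : V -> Om) :=
  sat (@norho Om) phi s.

Definition simq (Om : Type) (q : opset Om) (a b : Om) : Prop :=
  forall (W : Type) (phi : fml q (unit + W)) (c : W -> Om),
    satq phi (senv (fun _ => a) c) <-> satq phi (senv (fun _ => b) c).

Definition is_sim (Om : Type) (pi : Om -> Om -> Prop) : Prop :=
  (forall a, exists b, pi a b) /\ (forall b, exists a, pi a b).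
Definition sim_set (Om : Type) (P : simset Om) : Prop :=
  forall pi, P pi -> is_sim pi.
Definition tup_rel (Om : Type) (pi : Om -> Om -> Prop) (k : nat) (a b : tup Om k) :=
  forall i, pi (a i) (b i).
Definition rel_sim (Om : Type) (pi : Om -> Om -> Prop) (k : nat) (R S : rel Om k) :=
  forall a b : tup Om k, tup_rel pi a b -> (R a <-> S b).
Definition rel_inv (Om : Type) (pi : Om -> Om -> Prop) (k : nat) (R : rel Om k) :=
  rel_sim pi R R.
Definition quant_inv (Om : Type) (eqv pi : Om -> Om -> Prop) (l : nat)
  (ar : Fin.t l -> nat) (Q : quant Om ar) : Prop :=
  forall Rs Ss : rels Om ar,
    (forall i, rel_inv eqv (Rs i)) -> (forall i, rel_inv eqv (Ss i)) ->
    (forall i, rel_sim pi (Rs i) (Ss i)) -> (Q Rs <-> Q Ss).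

Definition approx (Om : Type) (P : simset Om) (a b : Om) : Prop :=
  forall (k : nat) (c : tup Om k), exists pi, P pi /\ pi a b /\ tup_rel pi c c.

Definition Inv (Om : Type) (P : simset Om) : opset Om :=
  fun o => match o with
  | @ORel _ k R => forall pi, P pi -> rel_inv pi R
  | @OQuant _ l ar Q => forall pi, P pi -> quant_inv (approx P) pi Q
  end.

Definition Sim (Om : Type) (q : opset Om) : simset Om :=
  fun pi => is_sim pi /\
    forall o, q o -> match o with
      | @ORel _ k R => rel_inv pi R
      | @OQuant _ l ar Q => quant_inv (simq q) pi Q
      end.

Definition definable (Om : Type) (q : opset Om) (k : nat) (R : rel Om k) : Prop :=
  exists phi : fml q (Fin.t k), forall t, satq phi t <-> R t.
Definition definable_par (Om : Type) (q : opset Om) (k : nat) (R : rel Om k) : Prop :=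
  exists (W : Type) (c : W -> Om) (phi : fml q (Fin.t k + W)),
    forall t, satq phi (senv t c) <-> R t.
Definition restrictq (Om : Type) (q : opset Om) (l : nat) (ar : Fin.t l -> nat)
  (Q : quant Om ar) : quant Om ar :=
  fun Rs => Q Rs /\ forall i, definable_par q (Rs i).
(* a class Q' of relation tuples of type ar is defined by a sentence of
   L^-(q) expanded with new predicate symbols of arities ar *)
Definition qdefinable (Om : Type) (q : opset Om) (l : nat) (ar : Fin.t l -> nat)
  (Q' : quant Om ar) : Prop :=
  exists phi : form q ar Empty_set,
    forall Rs : rels Om ar, sat Rs phi (fun e => match e with end) <-> Q' Rs.

Definition compose (Om : Type) (pi sg : Om -> Om -> Prop) (a c : Om) : Prop :=
  exists b, pi a b /\ sg b c.
Definition converse (Om : Type) (pi : Om -> Om -> Prop) (a b : Om) : Prop := pi b a.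
Definition monoid_inv (Om : Type) (P : simset Om) : Prop :=
  (forall pi sg, P pi -> P sg -> P (compose pi sg)) /\
  (forall pi, P pi -> P (converse pi)).
Definition full (Om : Type) (P : simset Om) : Prop :=
  monoid_inv P /\ P (approx P) /\
  (forall pi pi', P pi -> is_sim pi' -> (forall a b, pi' a b -> pi a b) -> P pi').

(* Main.v *)
Require Import Defs.
From Stdlib Require Import Fin.
From Stdlib Require Import Arith Lia Classical ClassicalEpsilon FunctionalExtensionality PropExtensionality.


Notation cid := constructive_indefinite_description.

Lemma Q_ext (Om : Type) (l : nat) (ar : Fin.t l -> nat) (Q : quant Om ar) (Rs Ss : rels Om ar) :
  (forall i t, Rs i t <-> Ss i t) -> (Q Rs <-> Q Ss).
Proof.
  intro H. assert (Rs = Ss) as ->. { apply functional_extensionality_dep; intro i.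
  apply functional_extensionality; intro t. apply propositional_extensionality. apply H. }
  tauto.
Qed.

Definition mapl {V V' W : Type} (f : V -> V') (x : V + W) : V' + W :=
  match x with inl v => inl (f v) | inr w => inr w end.

Fixpoint rn {Om : Type} {q : opset Om} {E : Type} {ea : E -> nat} {V : Type}
  (phi : form q ea V) {struct phi} : forall V', (V -> V') -> form q ea V' :=
  match phi in form _ _ V0 return forall V', (V0 -> V') -> form q ea V' with
  | @FRel _ _ _ _ _ k R h xs => fun V' f => @FRel _ _ _ _ V' k R h (fun i => f (xs i))
  | @FExt _ _ _ _ _ e xs => fun V' f => @FExt _ _ _ _ V' e (fun i => f (xs i))
  | @FNot _ _ _ _ _ psi => fun V' f => FNot (rn psi _ f)
  | @FAnd _ _ _ _ _ J psi => fun V' f => FAnd (fun i : J => rn (psi i) _ f)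
  | @FOr _ _ _ _ _ J psi => fun V' f => FOr (fun i : J => rn (psi i) _ f)
  | @FEx _ _ _ _ _ W psi => fun V' f => FEx (rn psi _ (mapl (W:=W) f))
  | @FAll _ _ _ _ _ W psi => fun V' f => FAll (rn psi _ (mapl (W:=W) f))
  | @FQ _ _ _ _ _ l ar Q h psi => fun V' f => FQ h (fun i => rn (psi i) _ (mapl f))
  end.
Arguments rn {Om q E ea V} phi {V'} f.

Lemma senv_mapl (Om V V' W : Type) (f : V -> V') (s : V' -> Om) (w : W -> Om) :
  (fun x => senv s w (mapl f x)) = senv (fun v => s (f v)) w.
Proof. apply functional_extensionality; intros [x|x]; reflexivity. Qed.

Lemma sat_rn (Om : Type) (q : opset Om) (E : Type) (ea : E -> nat)
  (rho : forall e, rel Om (ea e)) (V : Type) (phi : form q ea V) :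
  forall V' (f : V -> V') (s : V' -> Om),
  sat rho (rn phi f) s <-> sat rho phi (fun v => s (f v)).
Proof.
  induction phi; intros V' f s; simpl.
  - tauto.
  - tauto.
  - rewrite IHphi; tauto.
  - split; intros H0 i; apply H; auto.
  - split; intros [i Hi]; exists i; apply H; auto.
  - setoid_rewrite IHphi. setoid_rewrite senv_mapl. tauto.
  - setoid_rewrite IHphi. setoid_rewrite senv_mapl. tauto.
  - apply Q_ext; intros i t. rewrite H. rewrite senv_mapl. tauto.
Qed.

Fixpoint lift {Om : Type} {q : opset Om} {E : Type} {ea : E -> nat} {V : Type}
  (phi : fml q V) {struct phi} : form q ea V :=
  match phi in form _ _ V0 return form q ea V0 with
  | @FRel _ _ _ _ V0 k R h xs => @FRel _ _ _ _ V0 k R h xs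
  | @FExt _ _ _ _ _ e xs => match e with end
  | @FNot _ _ _ _ _ psi => FNot (lift psi)
  | @FAnd _ _ _ _ _ J psi => FAnd (fun i : J => lift (psi i))
  | @FOr _ _ _ _ _ J psi => FOr (fun i : J => lift (psi i))
  | @FEx _ _ _ _ _ W psi => FEx (lift psi)
  | @FAll _ _ _ _ _ W psi => FAll (lift psi)
  | @FQ _ _ _ _ _ l ar Q h psi => FQ h (fun i => lift (psi i))
  end.

Lemma sat_lift (Om : Type) (q : opset Om) (E : Type) (ea : E -> nat)
  (rho : forall e, rel Om (ea e)) (V : Type) (phi : fml q V) :
  forall s, sat rho (lift (ea:=ea) phi) s <-> satq phi s.
Proof.
  unfold satq. induction phi; intros s; simpl.
  - tauto.
  - destruct e.
  - rewrite IHphi; tauto.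
  - split; intros H0 i; apply H; auto.
  - split; intros [i Hi]; exists i; apply H; auto.
  - split; intros [w Hw]; exists w; apply IHphi; auto.
  - split; intros Hw w; apply IHphi; auto.
  - apply Q_ext; intros i t. rewrite H. tauto.
Qed.

Definition Dset {Om : Type} (q : opset Om) (V : Type) :=
  { S : (V -> Om) -> Prop | exists phi : fml q V, forall s, satq phi s <-> S s }.
Definition dform {Om : Type} {q : opset Om} {V : Type} (S : Dset q V) : fml q V :=
  proj1_sig (cid _ (proj2_sig S)).
Lemma dform_spec (Om : Type) (q : opset Om) (V : Type) (S : Dset q V) s :
  satq (dform S) s <-> proj1_sig S s.
Proof. unfold dform. destruct (cid _ (proj2_sig S)) as [phi Hphi]. simpl. apply Hphi. Qed.

Definition TypeEq {Om : Type} (q : opset Om) {V : Type} (s0 : V -> Om) : fml q V :=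
  FAnd (fun S : { S : Dset q V | proj1_sig S s0 } => dform (proj1_sig S)).

Lemma TypeEq_spec (Om : Type) (q : opset Om) (V : Type) (s0 s : V -> Om) :
  satq (TypeEq q s0) s <-> forall phi : fml q V, satq phi s <-> satq phi s0.
Proof.
  split.
  - intros H phi. unfold satq in H; simpl in H.
    destruct (classic (satq phi s0)) as [H0|H0].
    + set (S := exist (fun S => exists phi, forall s, satq phi s <-> S s) (satq phi)
                  (ex_intro (fun psi : fml q V => forall s, satq psi s <-> satq phi s) phi (fun s => iff_refl _)) : Dset q V).
      specialize (H (exist _ S H0)). simpl in H. apply dform_spec in H. simpl in H. tauto.
    + set (S := exist (fun S => exists phi, forall s, satq phi s <-> S s) (fun s => ~ satq phi s)
                  (ex_intro (fun psi : fml q V => forall s, satq psi s <-> ~ satq phi s) (FNot phi) (fun s => iff_refl _)) : Dset q V).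
      specialize (H (exist _ S H0)). simpl in H. apply dform_spec in H. simpl in H. tauto.
  - intros H. unfold satq; simpl. intros [S HS]. simpl. apply (H (dform S)).
    apply dform_spec. exact HS.
Qed.
Arguments TypeEq : simpl never.


Lemma choice_fun {A B : Type} (P : A -> B -> Prop) :
  (forall x, exists y, P x y) -> exists f : A -> B, forall x, P x (f x).
Proof.
  intro H. exists (fun x => proj1_sig (constructive_indefinite_description _ (H x))).
  intro x. exact (proj2_sig (constructive_indefinite_description _ (H x))).
Qed.

Definition upd {Om : Type} {k : nat} (t : tup Om k) (j : Fin.t k) (v : Om) : tup Om k :=
  fun i => if Fin.eq_dec i j then v else t i.

Lemma chain (Om : Type) (k : nat) (R : rel Om k) (E : Om -> Om -> Prop) :
  (forall t j v, E (t j) v -> (R t <-> R (upd t j v))) ->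
  forall t t', (forall i, E (t i) (t' i)) -> (R t <-> R t').
Proof.
  intros H t t' Ht.
  set (mix := fun m : nat => (fun i => if Nat.ltb (proj1_sig (Fin.to_nat i)) m then t' i else t i) : tup Om k).
  assert (Hm : forall m, R t <-> R (mix m)).
  { induction m.
    - assert (mix 0 = t) as ->.
      { apply functional_extensionality; intro i. unfold mix. destruct (proj1_sig (Fin.to_nat i)); reflexivity. }
      tauto.
    - destruct (Nat.lt_ge_cases m k) as [Hlt|Hge].
      + set (j := Fin.of_nat_lt Hlt).
        assert (Hj : proj1_sig (Fin.to_nat j) = m).
        { unfold j. rewrite Fin.to_nat_of_nat. reflexivity. }
        assert (mix (S m) = upd (mix m) j (t' j)) as ->.
        { apply functional_extensionality; intro i. unfold mix, upd.
          destruct (Fin.eq_dec i j) as [->|Hne].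
          - rewrite Hj. destruct (Nat.ltb_spec m (S m)); [reflexivity|lia].
          - assert (proj1_sig (Fin.to_nat i) <> m).
            { intro E0. apply Hne. apply Fin.to_nat_inj. rewrite Hj. exact E0. }
            destruct (Nat.ltb_spec (proj1_sig (Fin.to_nat i)) (S m));
            destruct (Nat.ltb_spec (proj1_sig (Fin.to_nat i)) m); try reflexivity; lia. }
        rewrite IHm. apply H. unfold mix. rewrite Hj.
        destruct (Nat.ltb_spec m m); [lia|]. apply Ht.
      + assert (mix (S m) = mix m) as ->; [|exact IHm].
        apply functional_extensionality; intro i. unfold mix.
        destruct (Fin.to_nat i) as [x Hx]; simpl.
        destruct (Nat.ltb_spec x (S m)); destruct (Nat.ltb_spec x m); try reflexivity; lia. }
  assert (Hk : mix k = t').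
  { apply functional_extensionality; intro i. unfold mix.
    destruct (Fin.to_nat i) as [x Hx]; simpl.
    destruct (Nat.ltb_spec x k); [reflexivity|lia]. }
  rewrite (Hm k). rewrite Hk. tauto.
Qed.

Lemma upd_same (Om : Type) (k : nat) (t : tup Om k) j : upd t j (t j) = t.
Proof. apply functional_extensionality; intro i. unfold upd. destruct (Fin.eq_dec i j); subst; reflexivity. Qed.

Lemma simq_refl (Om : Type) (q : opset Om) a : simq q a a.
Proof. intros W phi c. tauto. Qed.
Lemma simq_sym (Om : Type) (q : opset Om) a b : simq q a b -> simq q b a.
Proof. intros H W phi c. rewrite (H W phi c). tauto. Qed.
Lemma simq_trans (Om : Type) (q : opset Om) a b c : simq q a b -> simq q b c -> simq q a c.
Proof. intros H1 H2 W phi d. rewrite (H1 W phi d). apply H2. Qed.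

Lemma refl_Sim (Om : Type) (q : opset Om) (E : Om -> Om -> Prop) :
  (forall a, E a a) -> (forall k (R : rel Om k), q (ORel R) -> rel_inv E R) -> Sim q E.
Proof.
  intros Hr HR. split.
  - split; intro a; exists a; apply Hr.
  - intros [k R|l ar Q] Ho.
    + apply HR; exact Ho.
    + intros Rs Ss _ _ Hs. apply Q_ext. intros i t. apply (Hs i t t). intro m; apply Hr.
Qed.

Lemma simq_onecoord (Om : Type) (q : opset Om) (k : nat) (R : rel Om k) (h : q (ORel R)) :
  forall t j v, simq q (t j) v -> (R t <-> R (upd t j v)).
Proof.
  intros t j v Hv.
  set (phi := FRel noext h (fun i => if Fin.eq_dec i j then inl tt else inr i) : fml q (unit + Fin.t k)).
  specialize (Hv (Fin.t k) phi t). unfold satq in Hv; simpl in Hv.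
  assert (E1 : forall a, (fun i => senv (fun _ : unit => a) t (if Fin.eq_dec i j then inl tt else inr i)) = upd t j a).
  { intro a. apply functional_extensionality; intro i. unfold upd. destruct (Fin.eq_dec i j); reflexivity. }
  rewrite !E1 in Hv. rewrite upd_same in Hv. exact Hv.
Qed.

Lemma simq_Sim (Om : Type) (q : opset Om) : Sim q (simq q).
Proof.
  apply refl_Sim; [apply simq_refl|].
  intros k R h t t' Ht. apply (chain Om k R (simq q)); [|exact Ht].
  apply simq_onecoord; exact h.
Qed.

Lemma pres (Om : Type) (q : opset Om) (E : Type) (ea : E -> nat) (V : Type) (phi : form q ea V) :
  forall pi, Sim q pi -> forall (rho rho' : forall e, rel Om (ea e)),
  (forall e, rel_sim pi (rho e) (rho' e)) ->
  (forall e, rel_inv (simq q) (rho e)) -> (forall e, rel_inv (simq q) (rho' e)) ->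
  forall s s', (forall v, pi (s v) (s' v)) -> (sat rho phi s <-> sat rho' phi s').
Proof.
  induction phi; intros pi Hpi rho rho' Hr Hi Hi' s s' Hs; simpl.
  - destruct Hpi as [_ Hpi]. apply (Hpi (ORel R) h). intro i; apply Hs.
  - apply Hr. intro i; apply Hs.
  - rewrite (IHphi pi Hpi rho rho' Hr Hi Hi' s s' Hs). tauto.
  - split; intros H0 i; specialize (H i pi Hpi rho rho' Hr Hi Hi' s s' Hs); specialize (H0 i); tauto.
  - split; intros [i H0]; exists i; specialize (H i pi Hpi rho rho' Hr Hi Hi' s s' Hs); tauto.
  - destruct Hpi as [[Hl Hr0] Hpi0]. split.
    + intros [w Hw]. destruct (choice_fun (fun x y => pi (w x) y) (fun x => Hl (w x))) as [w' Hw'].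
      exists w'. apply -> (IHphi pi (conj (conj Hl Hr0) Hpi0) rho rho' Hr Hi Hi' (senv s w) (senv s' w')); auto.
      intros [v|x]; simpl; auto.
    + intros [w' Hw']. destruct (choice_fun (fun x y => pi y (w' x)) (fun x => Hr0 (w' x))) as [w Hw].
      exists w. apply <- (IHphi pi (conj (conj Hl Hr0) Hpi0) rho rho' Hr Hi Hi' (senv s w) (senv s' w')); auto.
      intros [v|x]; simpl; auto.
  - destruct Hpi as [[Hl Hr0] Hpi0]. split.
    + intros Hw w'. destruct (choice_fun (fun x y => pi y (w' x)) (fun x => Hr0 (w' x))) as [w Hw1].
      apply -> (IHphi pi (conj (conj Hl Hr0) Hpi0) rho rho' Hr Hi Hi' (senv s w) (senv s' w')); auto.
      intros [v|x]; simpl; auto.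
    + intros Hw w. destruct (choice_fun (fun x y => pi (w x) y) (fun x => Hl (w x))) as [w' Hw1].
      apply <- (IHphi pi (conj (conj Hl Hr0) Hpi0) rho rho' Hr Hi Hi' (senv s w) (senv s' w')); auto.
      intros [v|x]; simpl; auto.
  - pose proof Hpi as [Hsim Hpi0]. pose proof (Hpi0 (OQuant Q) h) as HQ. simpl in HQ. apply HQ.
    + intros i t t' Ht. apply (H i (simq q) (simq_Sim Om q) rho rho); auto.
      intros [v|m]; simpl; [apply simq_refl|apply Ht].
    + intros i t t' Ht. apply (H i (simq q) (simq_Sim Om q) rho' rho'); auto.
      intros [v|m]; simpl; [apply simq_refl|apply Ht].
    + intros i t t' Ht. apply (H i pi Hpi rho rho'); auto.
      intros [v|m]; simpl; auto.
Qed.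

Lemma presq (Om : Type) (q : opset Om) (V : Type) (phi : fml q V) pi :
  Sim q pi -> forall s s', (forall v, pi (s v) (s' v)) -> (satq phi s <-> satq phi s').
Proof.
  intros Hpi s s' Hs. unfold satq. apply (pres Om q Empty_set noext V phi pi Hpi); auto; intros [].
Qed.


Lemma dchoice {A : Type} {B : A -> Type} (P : forall x, B x -> Prop) :
  (forall x, exists y, P x y) -> exists f : (forall x, B x), forall x, P x (f x).
Proof.
  intro H. exists (fun x => proj1_sig (constructive_indefinite_description _ (H x))).
  intro x. exact (proj2_sig (constructive_indefinite_description _ (H x))).
Qed.

Lemma approx_sub_simq (Om : Type) (q : opset Om) (X : simset Om) :
  (forall k (R : rel Om k), q (ORel R) -> forall pi, X pi -> rel_inv pi R) ->
  forall a b, approx X a b -> simq q a b.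
Proof.
  intros HX a b Hab.
  set (E := fun x y => x = y \/ approx X x y).
  assert (HE : Sim q E).
  { apply refl_Sim. { intro; left; reflexivity. }
    intros k R h t t' Ht. apply (chain Om k R E); [|exact Ht].
    intros t0 j v [Heq|Hap].
    - subst v. rewrite upd_same. tauto.
    - destruct (Hap k t0) as [pi [Hpi [Hpv Hpt]]].
      apply (HX k R h pi Hpi). intro i. unfold upd.
      destruct (Fin.eq_dec i j); [subst; exact Hpv|apply Hpt]. }
  intros W phi c. apply (presq Om q _ phi E HE). intros [u|w]; simpl; [right; exact Hab | left; reflexivity].
Qed.

Lemma approx_Sim_simq (Om : Type) (q : opset Om) a b : approx (Sim q) a b -> simq q a b.
Proof.
  apply approx_sub_simq. intros k R h pi Hpi. exact (proj2 Hpi (ORel R) h).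
Qed.

Lemma simq_approx_Sim (Om : Type) (q : opset Om) a b : simq q a b -> approx (Sim q) a b.
Proof.
  intros H k c. exists (simq q). split; [apply simq_Sim|]. split; [exact H|].
  intro i; apply simq_refl.
Qed.

Definition defid {Om : Type} (q : opset Om) {k : nat} (R : rel Om k) :=
  exists theta : fml q (Om + Fin.t k), forall t, satq theta (senv (fun x => x) t) <-> R t.

Lemma defid_inv (Om : Type) (q : opset Om) k (R : rel Om k) : defid q R -> rel_inv (simq q) R.
Proof.
  intros [theta Ht] t t' Htt. rewrite <- (Ht t), <- (Ht t').
  apply (presq Om q _ theta _ (simq_Sim Om q)). intros [x|m]; simpl; [apply simq_refl|apply Htt].
Qed.

Definition swapf {X Y : Type} (z : X + Y) : Y + X := match z with inl x => inr x | inr y => inl y end.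

Lemma defpar_defid (Om : Type) (q : opset Om) k (R : rel Om k) : definable_par q R -> defid q R.
Proof.
  intros [W [c [phi Hphi]]].
  exists (rn phi (fun z : Fin.t k + W => match z with inl i => inr i | inr w => inl (c w) end)).
  intro t. unfold satq. rewrite sat_rn. rewrite <- (Hphi t). unfold satq.
  assert (E : (fun v : Fin.t k + W => senv (fun x => x) t match v with inl i => inr i | inr w => inl (c w) end) = senv t c).
  { apply functional_extensionality; intros [i|w]; reflexivity. }
  rewrite E. tauto.
Qed.

Lemma defid_defpar (Om : Type) (q : opset Om) k (R : rel Om k) : defid q R -> definable_par q R.
Proof.
  intros [theta Ht]. exists Om, (fun x => x), (rn theta swapf).
  intro t. unfold satq. rewrite sat_rn. rewrite <- (Ht t). unfold satq.
  assert (E : (fun v => senv t (fun x : Om => x) (swapf v)) = senv (fun x => x) t).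
  { apply functional_extensionality; intros [i|w]; reflexivity. }
  rewrite E. tauto.
Qed.

Lemma types_simq (Om : Type) (q : opset Om) a b :
  (forall phi : fml q (unit + Om), satq phi (senv (fun _ => a) (fun x => x)) <-> satq phi (senv (fun _ => b) (fun x => x))) ->
  simq q a b.
Proof.
  intros H W phi c.
  set (f := fun z : unit + W => match z with inl u => inl u | inr w => inr (c w) end : unit + Om).
  specialize (H (rn phi f)). unfold satq in H. rewrite !sat_rn in H.
  assert (E : forall x, (fun v => senv (fun _ : unit => x) (fun y : Om => y) (f v)) = senv (fun _ => x) c).
  { intro x. apply functional_extensionality; intros [u|w]; reflexivity. }
  rewrite !E in H. exact H.
Qed.

Lemma inv_defid (Om : Type) (q : opset Om) k (R : rel Om k) : rel_inv (simq q) R -> defid q R.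
Proof.
  intros HR.
  set (g := fun (i : Fin.t k) (z : unit + Om) => match z with inl _ => inr i | inr x => inl x end : Om + Fin.t k).
  exists (FOr (fun p : {ab : tup Om k | R ab} =>
            FAnd (fun i : Fin.t k => rn (TypeEq q (senv (fun _ : unit => proj1_sig p i) (fun x : Om => x))) (g i)))).
  intro t. unfold satq; simpl.
  assert (E : forall i, (fun v => senv (fun x : Om => x) t (g i v)) = senv (fun _ : unit => t i) (fun x => x)).
  { intro i. apply functional_extensionality; intros [u|w]; reflexivity. }
  setoid_rewrite sat_rn. setoid_rewrite E. split.
  - intros [[ab Hab] Hp]. simpl in Hp.
    apply (HR ab t); [|exact Hab]. intro i. apply simq_sym. apply types_simq.
    apply TypeEq_spec. exact (Hp i).
  - intros Ht. exists (exist _ t Ht). simpl. intro i. apply TypeEq_spec. tauto.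
Qed.

Lemma key (Om : Type) (q : opset Om) (A : Type) (a b : A -> Om) :
  (forall x, exists j, a j = x) ->
  (forall phi : fml q A, satq phi a <-> satq phi b) ->
  exists pi, Sim q pi /\ forall j, pi (a j) (b j).
Proof.
  intros Hsurj Hab.
  set (Psi := FAll (W:=A) (FOr (fun u : A -> Om => TypeEq q (V:=A + A) (senv a u))) : fml q A).
  assert (HPa : satq Psi a).
  { intro y. exists y. exact (proj2 (TypeEq_spec Om q (A+A) (senv a y) (senv a y)) (fun phi => iff_refl _)). }
  apply Hab in HPa. destruct (HPa a) as [u Hu].
  pose proof (proj1 (TypeEq_spec Om q (A+A) (senv a u) (senv b a)) Hu) as Hu'. clear Hu; rename Hu' into Hu.
  set (pi := fun x y => exists z : A + A, x = senv a u z /\ y = senv b a z).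
  assert (joint : forall V (phi : fml q V) s s', (forall v, pi (s v) (s' v)) -> (satq phi s <-> satq phi s')).
  { intros V phi s s' Hs.
    destruct (choice_fun _ Hs) as [f Hf].
    assert (E1 : s = fun v => senv a u (f v)) by (apply functional_extensionality; intro v; apply Hf).
    assert (E2 : s' = fun v => senv b a (f v)) by (apply functional_extensionality; intro v; apply Hf).
    pose proof (sat_rn Om q Empty_set noext (@norho Om) V phi (A+A) f (senv a u)) as H1.
    pose proof (sat_rn Om q Empty_set noext (@norho Om) V phi (A+A) f (senv b a)) as H2.
    pose proof (Hu (rn phi f)) as H3. unfold satq in *. rewrite E1, E2. tauto. }
  destruct (choice_fun _ Hsurj) as [g Hg].
  exists pi. split.
  - split.
    + split.
      * intro x. destruct (Hsurj x) as [j <-]. exists (b j). exists (inl j). auto.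
      * intro y. destruct (Hsurj y) as [j <-]. exists (u j). exists (inr j). auto.
    + intros [k R|l ar Q] h.
      * intros t t' Ht. exact (joint _ (FRel noext h (fun i => i)) t t' Ht).
      * intros Rs Ss HRs HSs Hsim.
        destruct (dchoice (B := fun i => fml q (Om + Fin.t (ar i))) (fun i theta => forall t, satq theta (senv (fun x => x) t) <-> Rs i t)
                   (fun i => inv_defid Om q (ar i) (Rs i) (HRs i))) as [theta Htheta].
        set (Phi := FQ h (fun i => rn (theta i) (mapl g)) : fml q A).
        assert (Ea : forall i t, satq (rn (theta i) (mapl g)) (senv a t) <-> Rs i t).
        { intros i t. unfold satq. rewrite sat_rn, senv_mapl. rewrite <- Htheta. unfold satq.
          assert (E : (fun v => a (g v)) = (fun x => x)) by (apply functional_extensionality; apply Hg).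
          rewrite E. tauto. }
        assert (Eb : forall i t, satq (rn (theta i) (mapl g)) (senv b t) <-> Ss i t).
        { intros i t. set (t0 := fun m => u (g (t m))).
          assert (Ht0 : tup_rel pi t0 t).
          { intro m. exists (inr (g (t m))). simpl. split; [reflexivity|]. symmetry; apply Hg. }
          rewrite <- (Hsim i t0 t Ht0). rewrite <- Ea. symmetry. apply joint.
          intros [j|m]; simpl; [exists (inl j); auto|exact (Ht0 m)]. }
        assert (HPhi : satq Phi a <-> satq Phi b) by apply Hab.
        unfold Phi, satq in HPhi; simpl in HPhi.
        rewrite (Q_ext Om l ar Q _ Rs Ea) in HPhi. rewrite (Q_ext Om l ar Q _ Ss Eb) in HPhi. exact HPhi.
  - intro j. exists (inl j). auto.
Qed.


Lemma inv_simq_approx (Om : Type) (q : opset Om) k (R : rel Om k) :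
  rel_inv (simq q) R -> rel_inv (approx (Sim q)) R.
Proof. intros H t t' Ht. apply H. intro i. apply approx_Sim_simq. apply Ht. Qed.

Lemma inv_approx_simq (Om : Type) (q : opset Om) k (R : rel Om k) :
  rel_inv (approx (Sim q)) R -> rel_inv (simq q) R.
Proof. intros H t t' Ht. apply H. intro i. apply simq_approx_Sim. apply Ht. Qed.

Lemma part1_rel (Om : Type) (q : opset Om) k (R : rel Om k) :
  Inv (Sim q) (ORel R) <-> definable q R.
Proof.
  split.
  - intro HR.
    exists (FOr (fun p : {ab : tup Om k | R ab} =>
               FEx (W:=Om) (TypeEq q (V:=Fin.t k + Om) (senv (proj1_sig p) (fun x => x))))).
    intro t. split.
    + intros [[ab Hab] [w Hw]].
      pose proof (proj1 (TypeEq_spec Om q _ (senv ab (fun x => x)) (senv t w)) Hw) as Hw'.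
      destruct (key Om q (Fin.t k + Om) (senv ab (fun x => x)) (senv t w)) as [pi [Hpi Hpj]].
      * intro x; exists (inr x); reflexivity.
      * intro phi; symmetry; apply Hw'.
      * apply (HR pi Hpi ab t); [intro i; apply (Hpj (inl i)) | exact Hab].
    + intro Ht. exists (exist _ t Ht). exists (fun x => x).
      exact (proj2 (TypeEq_spec Om q _ (senv t (fun x => x)) (senv t (fun x => x))) (fun phi => iff_refl _)).
  - intros [phi Hphi] pi Hpi t t' Ht. rewrite <- (Hphi t), <- (Hphi t').
    apply (presq Om q _ phi pi Hpi). exact Ht.
Qed.

Definition fiff {Om : Type} {q : opset Om} {E : Type} {ea : E -> nat} {V : Type}
  (a b : form q ea V) : form q ea V :=
  FAnd (fun x : bool => if x then FOr (fun y : bool => if y then FNot a else b)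
                        else FOr (fun y : bool => if y then FNot b else a)).

Lemma sat_fiff (Om : Type) (q : opset Om) (E : Type) (ea : E -> nat) rho V (a b : form q ea V) s :
  sat rho (fiff a b) s <-> (sat rho a s <-> sat rho b s).
Proof.
  unfold fiff; simpl. split.
  - intro H. pose proof (H true) as H1. pose proof (H false) as H2. simpl in H1, H2.
    destruct H1 as [[|] H1]; destruct H2 as [[|] H2]; simpl in H1, H2; tauto.
  - intros H [|]; simpl.
    + destruct (classic (sat rho a s)); [exists false|exists true]; simpl; tauto.
    + destruct (classic (sat rho b s)); [exists false|exists true]; simpl; tauto.
Qed.

Section Quant.
Variables (Om : Type) (q : opset Om) (l : nat) (ar : Fin.t l -> nat) (Q : quant Om ar).

Definition IX := {Rs0 : rels Om ar | Q Rs0 /\ forall i, definable_par q (Rs0 i)}.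

Definition thetap (p : IX) (i : Fin.t l) : fml q (Om + Fin.t (ar i)) :=
  proj1_sig (constructive_indefinite_description _
     (defpar_defid Om q (ar i) (proj1_sig p i) (proj2 (proj2_sig p) i))).

Lemma thetap_spec p i t : satq (thetap p i) (senv (fun x => x) t) <-> proj1_sig p i t.
Proof.
  unfold thetap.
  destruct (constructive_indefinite_description _ (defpar_defid Om q (ar i) (proj1_sig p i) (proj2 (proj2_sig p) i))) as [th Hth].
  simpl. apply Hth.
Qed.

Definition mapT {i : Fin.t l} (z : Om + Fin.t (ar i)) : (Empty_set + Om) + Fin.t (ar i) :=
  match z with inl x => inl (inr x) | inr m => inr m end.

Definition qsent : form q ar Empty_set :=
  FOr (fun p : IX => FEx (W:=Om) (FAnd (fun o : option (Fin.t l) =>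
    match o with
    | None => lift (rn (TypeEq q (V:=Om) (fun x => x)) (@inr Empty_set Om))
    | Some i => FAll (W := Fin.t (ar i))
        (fiff (FExt q (e:=i) (fun m => inr m)) (lift (rn (thetap p i) mapT)))
    end))).

Lemma qsent_spec (Rs : rels Om ar) :
  sat Rs qsent (fun e => match e with end) <->
  exists (p : IX) (w : Om -> Om), (forall psi : fml q Om, satq psi w <-> satq psi (fun x => x)) /\
     (forall i t, Rs i t <-> satq (thetap p i) (senv w t)).
Proof.
  unfold qsent. cbn [sat].
  assert (EN : forall w, sat Rs (lift (rn (TypeEq q (V:=Om) (fun x => x)) (@inr Empty_set Om)))
                         (senv (fun e : Empty_set => match e with end) w) <->
                       (forall psi : fml q Om, satq psi w <-> satq psi (fun x => x))).
  { intro w. rewrite sat_lift. unfold satq. rewrite sat_rn. apply TypeEq_spec. }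
  assert (ES : forall p w i, (forall t, sat Rs (fiff (FExt q (e:=i) (fun m => inr m)) (lift (rn (thetap p i) mapT)))
                         (senv (senv (fun e : Empty_set => match e with end) w) t)) <->
                       (forall t, Rs i t <-> satq (thetap p i) (senv w t))).
  { intros p w i.
    assert (Ept : forall t, sat Rs (fiff (FExt q (e:=i) (fun m => inr m)) (lift (rn (thetap p i) mapT)))
                         (senv (senv (fun e : Empty_set => match e with end) w) t) <->
                         (Rs i t <-> satq (thetap p i) (senv w t))).
    { intro t. rewrite sat_fiff, sat_lift. unfold satq. rewrite sat_rn.
      assert (E : (fun v => senv (senv (fun e : Empty_set => match e with end) w) t (mapT v)) = senv w t).
      { apply functional_extensionality; intros [x|m]; reflexivity. }
      rewrite E. cbn [sat]. tauto. }
    split; intros H t; apply Ept, H. }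
  split.
  - intros [p [w H]]. exists p, w. split.
    + exact (proj1 (EN w) (H None)).
    + intro i. exact (proj1 (ES p w i) (H (Some i))).
  - intros [p [w [H1 H2]]]. exists p, w. intros [i|].
    + exact (proj2 (ES p w i) (H2 i)).
    + exact (proj2 (EN w) H1).
Qed.

End Quant.

Lemma part1_quant (Om : Type) (q : opset Om) (l : nat) (ar : Fin.t l -> nat) (Q : quant Om ar) :
  Inv (Sim q) (OQuant Q) <-> qdefinable q (restrictq q Q).
Proof.
  split.
  - intro HQ. exists (qsent Om q l ar Q). intro Rs. rewrite qsent_spec. split.
    + intros [p [w [Hw HRs]]].
      destruct (key Om q Om (fun x => x) w) as [pi [Hpi Hpw]].
      * intro x; exists x; reflexivity.
      * intro psi; symmetry; apply Hw.
      * assert (Hsim : forall i, rel_sim pi (proj1_sig p i) (Rs i)).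
        { intros i t t' Ht. rewrite <- thetap_spec, HRs.
          apply (presq Om q _ (thetap Om q l ar Q p i) pi Hpi).
          intros [x|m]; simpl; [apply Hpw|apply Ht]. }
        assert (Hdp : forall i, definable_par q (Rs i)).
        { intro i. exists Om, w, (rn (thetap Om q l ar Q p i) swapf). intro t.
          rewrite HRs. unfold satq. rewrite sat_rn.
          assert (E : (fun v => senv t w (swapf v)) = senv w t).
          { apply functional_extensionality; intros [x|m]; reflexivity. }
          rewrite E. tauto. }
        split; [|exact Hdp].
        apply (HQ pi Hpi (proj1_sig p) Rs).
        -- intro i. apply inv_simq_approx. apply defid_inv.
           exists (thetap Om q l ar Q p i). apply thetap_spec.
        -- intro i. apply inv_simq_approx. apply defid_inv. apply defpar_defid. apply Hdp.
        -- exact Hsim.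
        -- exact (proj1 (proj2_sig p)).
    + intros [HQR Hdp]. exists (exist _ Rs (conj HQR Hdp)), (fun x => x). split.
      * intro psi; tauto.
      * intros i t. rewrite thetap_spec. simpl. tauto.
  - intros [phi Hphi] pi Hpi Rs Ss HRs HSs Hs.
    assert (HRs' : forall i, rel_inv (simq q) (Rs i)) by (intro i; apply inv_approx_simq, HRs).
    assert (HSs' : forall i, rel_inv (simq q) (Ss i)) by (intro i; apply inv_approx_simq, HSs).
    pose proof (pres Om q (Fin.t l) ar Empty_set phi pi Hpi Rs Ss Hs HRs' HSs'
                  (fun e => match e with end) (fun e => match e with end) (fun v => match v with end)) as Hp.
    rewrite (Hphi Rs), (Hphi Ss) in Hp. unfold restrictq in Hp.
    assert (forall i, definable_par q (Rs i)) by (intro i; apply defid_defpar, inv_defid, HRs').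
    assert (forall i, definable_par q (Ss i)) by (intro i; apply defid_defpar, inv_defid, HSs').
    tauto.
Qed.


Lemma Sim_conv (Om : Type) (q : opset Om) pi : Sim q pi -> Sim q (converse pi).
Proof.
  intros [[Hl Hr] Hpi]. split.
  - split; [exact Hr|exact Hl].
  - intros [k R|l ar Q] h.
    + intros t t' Ht. pose proof (Hpi (ORel R) h t' t Ht). simpl in H. tauto.
    + intros Rs Ss HR HS Hs. pose proof (Hpi (OQuant Q) h) as HQ. simpl in HQ.
      rewrite (HQ Ss Rs HS HR). { tauto. }
      intros i t t' Ht. rewrite (Hs i t' t Ht). tauto.
Qed.

Lemma respect (Om : Type) (q : opset Om) pi a b a' b' :
  Sim q pi -> pi a b -> pi a' b' -> simq q a a' -> simq q b b'.
Proof.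
  intros Hpi Hab Ha'b' Haa W phi c.
  destruct (choice_fun (fun w d => pi d (c w)) (fun w => proj2 (proj1 Hpi) (c w))) as [d Hd].
  rewrite <- (presq Om q _ phi pi Hpi (senv (fun _ => a) d) (senv (fun _ => b) c)).
  2: { intros [u|w]; simpl; auto. }
  rewrite <- (presq Om q _ phi pi Hpi (senv (fun _ => a') d) (senv (fun _ => b') c)).
  2: { intros [u|w]; simpl; auto. }
  apply Haa.
Qed.

Lemma respect' (Om : Type) (q : opset Om) pi a b a' b' :
  Sim q pi -> pi a b -> pi a' b' -> simq q b b' -> simq q a a'.
Proof.
  intros Hpi Hab Ha'b' Hbb. apply (respect Om q (converse pi) b a b' a'); auto.
  apply Sim_conv; auto.
Qed.

Lemma tup_choice (Om : Type) k (P : Om -> Om -> Prop) (t : tup Om k) :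
  (forall i, exists y, P (t i) y) -> exists u : tup Om k, forall i, P (t i) (u i).
Proof. intro H. destruct (choice_fun (fun i y => P (t i) y) H) as [u Hu]. exists u; auto. Qed.

Lemma Sim_comp (Om : Type) (q : opset Om) p1 p2 :
  Sim q p1 -> Sim q p2 -> Sim q (compose p1 p2).
Proof.
  intros H1 H2. pose proof H1 as [[Hl1 Hr1] Hp1]. pose proof H2 as [[Hl2 Hr2] Hp2]. split.
  - split.
    + intro a. destruct (Hl1 a) as [b Hb]. destruct (Hl2 b) as [c Hc]. exists c, b; auto.
    + intro c. destruct (Hr2 c) as [b Hb]. destruct (Hr1 b) as [a Ha]. exists a, b; auto.
  - intros [k R|l ar Q] h.
    + intros t t'' Ht.
      destruct (choice_fun (fun i b => p1 (t i) b /\ p2 b (t'' i)) Ht) as [u Hu].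
      rewrite (Hp1 (ORel R) h t u (fun i => proj1 (Hu i))).
      apply (Hp2 (ORel R) h u t'' (fun i => proj2 (Hu i))).
    + intros Rs Ss HR HS Hs.
      pose proof (Hp1 (OQuant Q) h) as HQ1. pose proof (Hp2 (OQuant Q) h) as HQ2. simpl in HQ1, HQ2.
      set (Ts := (fun i u => exists t, tup_rel p1 t u /\ Rs i t) : rels Om ar).
      assert (S1 : forall i, rel_sim p1 (Rs i) (Ts i)).
      { intros i t u Htu. split.
        - intro HRt. exists t. auto.
        - intros [t' [Ht'u HRt']].
          destruct (tup_choice Om _ p2 u (fun m => Hl2 (u m))) as [t'' Ht''].
          rewrite (Hs i t t''); [rewrite <- (Hs i t' t''); auto|];
          intro m; exists (u m); auto. }
      assert (S2 : forall i, rel_sim p2 (Ts i) (Ss i)).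
      { intros i u t'' Hut. split.
        - intros [t [Htu HRt]]. rewrite <- (Hs i t t''); auto. intro m; exists (u m); auto.
        - intro HSt.
          destruct (choice_fun (fun m a => p1 a (u m)) (fun m => Hr1 (u m))) as [t Ht].
          exists t. split; auto. rewrite (Hs i t t''); auto. intro m; exists (u m); auto. }
      assert (IT : forall i, rel_inv (simq q) (Ts i)).
      { intros i u u' Huu.
        assert (D : forall u u', tup_rel (simq q) u u' -> Ts i u -> Ts i u').
        { intros v v' Hvv [t [Htv HRt]].
          destruct (choice_fun (fun m a => p1 a (v' m)) (fun m => Hr1 (v' m))) as [t' Ht'].
          exists t'. split; auto.
          apply (HR i t t'); auto. intro m. apply (respect' Om q p1 _ (v m) _ (v' m)); auto. }
        split; apply D; auto. intro m. apply simq_sym; auto. }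
      rewrite (HQ1 Rs Ts HR IT S1). apply (HQ2 Ts Ss IT HS S2).
Qed.

Lemma Sim_sub (Om : Type) (q : opset Om) pi pi' :
  Sim q pi -> is_sim pi' -> (forall a b, pi' a b -> pi a b) -> Sim q pi'.
Proof.
  intros Hpi Hs' Hsub. pose proof Hpi as [_ Hp]. split; auto.
  intros [k R|l ar Q] h.
  - intros t t' Ht. apply (Hp (ORel R) h). intro i; auto.
  - intros Rs Ss HR HS Hs. pose proof (Hp (OQuant Q) h) as HQ. simpl in HQ. apply HQ; auto.
    intros i t t'' Ht.
    destruct (choice_fun (fun m a => pi' a (t'' m)) (fun m => proj2 Hs' (t'' m))) as [u Hu].
    rewrite (HR i t u). { apply Hs; auto. }
    intro m. apply (respect' Om q pi _ (t'' m) _ (t'' m)); auto. apply simq_refl.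
Qed.

Lemma approx_Sim_eq (Om : Type) (q : opset Om) : approx (Sim q) = simq q.
Proof.
  apply functional_extensionality; intro a. apply functional_extensionality; intro b.
  apply propositional_extensionality. split; [apply approx_Sim_simq|apply simq_approx_Sim].
Qed.

Lemma Sim_full (Om : Type) (q : opset Om) : full (Sim q).
Proof.
  split; [split|split].
  - apply Sim_comp.
  - apply Sim_conv.
  - rewrite approx_Sim_eq. apply simq_Sim.
  - intros pi pi' Hpi Hs Hsub. apply (Sim_sub Om q pi); auto.
Qed.

Lemma P_sub_Sim (Om : Type) (P : simset Om) (HP : sim_set P) pi : P pi -> Sim (Inv P) pi.
Proof.
  intro Hpi. split; [apply HP; auto|].
  intros [k R|l ar Q] h.
  - exact (h pi Hpi).
  - intros Rs Ss HR HS Hs. apply (h pi Hpi); auto.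
    + intros i t t' Ht. apply HR. intro m. apply (approx_sub_simq Om (Inv P) P); [|apply Ht].
      intros k0 R0 h0 pi0 Hpi0. exact (h0 pi0 Hpi0).
    + intros i t t' Ht. apply HS. intro m. apply (approx_sub_simq Om (Inv P) P); [|apply Ht].
      intros k0 R0 h0 pi0 Hpi0. exact (h0 pi0 Hpi0).
Qed.


Lemma wo_from_min (T : Type) (R : T -> T -> Prop)
  (wo : forall A : T -> Prop, (exists x, A x) ->
        exists z, A z /\ (forall x, A x -> R z x) /\
           (forall z', A z' -> (forall x, A x -> R z' x) -> z' = z)) :
  exists lt : T -> T -> Prop,
  (forall x y, lt x y -> lt y x -> False) /\
  (forall x y z, lt x y -> lt y z -> lt x z) /\
  (forall x y, x = y \/ lt x y \/ lt y x) /\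
  well_founded lt.
Proof.
  assert (antis : forall x y, R x y -> R y x -> x = y).
  { intros x y Hxy Hyx.
    destruct (wo (fun z => z = x \/ z = y)) as [m [Hm [Hlb Hu]]]; [exists x; auto|].
    assert (Rxx : R x x).
    { destruct (wo (fun z => z = x)) as [m' [Hm' [Hlb' _]]]; [exists x; auto|].
      subst m'. apply Hlb'. reflexivity. }
    assert (Ryy : R y y).
    { destruct (wo (fun z => z = y)) as [m' [Hm' [Hlb' _]]]; [exists y; auto|].
      subst m'. apply Hlb'. reflexivity. }
    rewrite (Hu x), (Hu y); auto; intros z [->| ->]; auto. }
  exists (fun x y => R x y /\ x <> y). split; [|split; [|split]].
  - intros x y [H1 H2] [H3 H4]. apply H2, antis; auto.
  - intros x y z [H1 H2] [H3 H4].
    destruct (wo (fun w => w = x \/ w = y \/ w = z)) as [m [Hm [Hlb _]]]; [exists x; auto|].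
    destruct Hm as [->|[->| ->]].
    + split; [apply Hlb; auto|]. intros ->. apply H2, antis; auto.
    + exfalso. apply H2, antis; auto.
    + exfalso. apply H4, antis; auto.
  - intros x y. destruct (classic (x = y)) as [|Hne]; [left; auto|right].
    destruct (wo (fun w => w = x \/ w = y)) as [m [Hm [Hlb _]]]; [exists x; auto|].
    destruct Hm as [->| ->]; [left|right]; split; auto.
  - intro a. apply NNPP. intro Hna.
    destruct (wo (fun w => ~ Acc (fun x y => R x y /\ x <> y) w)) as [m [Hm [Hlb _]]]; [exists a; auto|].
    apply Hm. constructor. intros y [Hy1 Hy2]. apply NNPP. intro Hny.
    apply Hy2, antis; auto.
Qed.

Module WOmod.
From mathcomp Require Import ssreflect ssrfun ssrbool eqtype.
From mathcomp Require Import boolp wochoice.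
Lemma wo_exists (T : Type) : exists lt : T -> T -> Prop,
  (forall x y, lt x y -> lt y x -> False) /\
  (forall x y z, lt x y -> lt y z -> lt x z) /\
  (forall x y, x = y \/ lt x y \/ lt y x) /\
  well_founded lt.
Proof.
  pose T' := classicType T.
  have [R HR] := well_ordering_principle T'.
  apply: (@wo_from_min T (fun x y => is_true (R x y))).
  move=> A [x Ax].
  have ne : nonempty (fun z : T' => `[< A z >]).
    by exists x; rewrite /in_mem /=; apply/asboolP.
  have [z [[Az Hlb] Hu]] := HR _ ne.
  exists z. split; [|split].
  - by move: Az; rewrite /in_mem /= => /asboolP.
  - move=> y Ay. apply: Hlb. by rewrite /in_mem /=; apply/asboolP.
  - move=> z' Az' Hlb'. symmetry. apply: Hu. split.
    + by rewrite /in_mem /=; apply/asboolP.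
    + move=> y; rewrite /in_mem /= => /asboolP Ay. exact: Hlb'.
Qed.
End WOmod.


Definition tup2 {X : Type} (x y : X) : Fin.t 2 -> X :=
  fun i => match proj1_sig (Fin.to_nat i) with 0 => x | _ => y end.
Definition F1_2 : Fin.t 2 := @Fin.F1 1.
Definition F2_2 : Fin.t 2 := @Fin.FS 1 (@Fin.F1 0).
Definition brel {Om : Type} (B : Om -> Om -> Prop) : rel Om 2 := fun t => B (t F1_2) (t F2_2).

Lemma brel_tup2 (Om : Type) (B : Om -> Om -> Prop) x y : brel B (tup2 x y) = B x y.
Proof. reflexivity. Qed.

Lemma tup_rel2 (Om : Type) (pi : Om -> Om -> Prop) x x' y y' :
  pi x y -> pi x' y' -> tup_rel pi (tup2 x x') (tup2 y y').
Proof. intros H1 H2 i. unfold tup2. destruct (proj1_sig (Fin.to_nat i)); auto. Qed.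

Lemma rigid (Om : Type) (ap R0 : Om -> Om -> Prop)
  (Rinv : forall x x' y y', ap x x' -> ap y y' -> R0 x y -> R0 x' y')
  (aprefl : forall x, ap x x) (apsym : forall x y, ap x y -> ap y x)
  (irr : forall x, ~ R0 x x) (tot : forall x y, ap x y \/ R0 x y \/ R0 y x)
  (wf : well_founded R0) (tau : Om -> Om -> Prop) (Ht : is_sim tau)
  (pres : forall x y x' y', tau x y -> tau x' y' -> (R0 x x' <-> R0 y y')) :
  forall x y, tau x y -> ap x y.
Proof.
  intro x. induction x as [x IH] using (well_founded_ind wf).
  intros y Hxy. destruct (tot x y) as [H|[H|H]]; auto.
  - destruct (proj2 Ht x) as [u Hu].
    assert (R0 u x) by (apply (pres u x x y); auto).
    exfalso. apply (irr x). apply (Rinv u x x x); auto.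
  - destruct (proj1 Ht y) as [w Hw]. pose proof (IH y H w Hw) as Hyw.
    assert (R0 w y) by (apply (pres y w x y); auto).
    exfalso. apply (irr y). apply (Rinv w y y y); auto.
Qed.

Lemma minimal_thm (Om : Type) (P : simset Om) (HP : sim_set P) (P' : simset Om)
  (HP' : sim_set P') (HF : full P') (Hsub : forall pi, P pi -> P' pi) pi (Hpi : Sim (Inv P) pi) :
  P' pi.
Proof.
  destruct HF as [[Hcomp Hconv] [Hap Hsubsim]].
  set (ap := approx P').
  assert (simP : forall s, P' s -> is_sim s) by exact HP'.
  assert (aprefl : forall a, ap a a).
  { intros a k c. set (s := approx P'). exists (compose s (converse s)). split; [apply Hcomp; auto|].
    destruct (simP s Hap) as [Hl _]. split.
    - destruct (Hl a) as [b Hb]. exists b; split; auto.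
    - intro i. destruct (Hl (c i)) as [b Hb]. exists b; split; auto. }
  assert (apsym : forall a b, ap a b -> ap b a).
  { intros a b H k c. destruct (H k c) as [s [Hs [H1 H2]]]. exists (converse s).
    split; [apply Hconv; auto|]. split; [exact H1|]. intro i; apply H2. }
  assert (aptrans : forall a b d, ap a b -> ap b d -> ap a d).
  { intros a b d H1 H2 k c. destruct (H1 k c) as [s1 [Hs1 [H11 H12]]].
    destruct (H2 k c) as [s2 [Hs2 [H21 H22]]]. exists (compose s1 s2).
    split; [apply Hcomp; auto|]. split; [exists b; auto|]. intro i; exists (c i); auto. }
  assert (apconj : forall s a1 b1 a2 b2, P' s -> s a1 b1 -> s a2 b2 -> ap a1 a2 -> ap b1 b2).
  { intros s a1 b1 a2 b2 Hs H1 H2 H12 k c.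
    destruct (choice_fun (fun i d => s d (c i)) (fun i => proj2 (simP s Hs) (c i))) as [d Hd].
    destruct (H12 k d) as [tau [Htau [Ht1 Ht2]]].
    exists (compose (converse s) (compose tau s)). split.
    { apply Hcomp; [apply Hconv; auto|apply Hcomp; auto]. }
    split.
    - exists a1. split; [exact H1|]. exists a2; auto.
    - intro i. exists (d i). split; [apply Hd|]. exists (d i); auto. }
  set (Req := brel ap).
  assert (hReq : Inv P (ORel Req)).
  { intros p Hp t t' Ht. unfold Req, brel. split.
    - apply (apconj p); auto; apply Ht.
    - apply (apconj (converse p)); [apply Hconv; auto|apply Ht|apply Ht]. }
  destruct Hpi as [[Hpl Hpr] Hpi].
  assert (resp : forall a b a' b', pi a b -> pi a' b' -> (ap a a' <-> ap b b')).
  { intros a b a' b' H1 H2. exact (Hpi (ORel Req) hReq (tup2 a a') (tup2 b b') (tup_rel2 _ _ _ _ _ _ H1 H2)). }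
  assert (simap : forall a b, simq (Inv P) a b -> ap a b).
  { intros a b H. apply apsym.
    set (phi := FRel noext hReq (tup2 (inl tt) (inr tt)) : fml (Inv P) (unit + unit)).
    specialize (H unit phi (fun _ => a)). unfold satq in H. cbn in H. apply H. apply aprefl. }
  destruct (WOmod.wo_exists Om) as [lt [Hasym [Htrans [Htot Hwf]]]].
  set (R0 := fun x y => exists a, ap a x /\ forall b, ap b y -> lt a b).
  assert (Rinv : forall x x' y y', ap x x' -> ap y y' -> R0 x y -> R0 x' y').
  { intros x x' y y' Hx Hy [a [Ha Hb]]. exists a. split; [eauto|]. intros b Hb'. apply Hb; eauto. }
  assert (irr : forall x, ~ R0 x x).
  { intros x [a [Ha Hb]]. apply (Hasym a a); apply Hb; auto. }
  assert (Hmin : forall A : Om -> Prop, (exists x, A x) -> exists z, A z /\ forall y, A y -> ~ lt y z).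
  { intros A [x Ax]. apply NNPP. intro Hn.
    assert (forall y, A y -> False).
    { intro y. induction y as [y IH] using (well_founded_ind Hwf). intro Ay.
      apply Hn. exists y. split; auto. intros y' Ay' Hl. exact (IH y' Hl Ay'). }
    eauto. }
  assert (tot : forall x y, ap x y \/ R0 x y \/ R0 y x).
  { intros x y. destruct (classic (ap x y)) as [|Hn]; [left; auto|right].
    destruct (Hmin (fun z => ap z x \/ ap z y)) as [z [Hz Hzm]]; [exists x; auto|].
    destruct Hz as [Hz|Hz].
    - left. exists z. split; auto. intros b Hb.
      destruct (Htot z b) as [<-|[H|H]]; auto.
      + exfalso; apply Hn; eauto.
      + exfalso; apply (Hzm b); auto.
    - right. exists z. split; auto. intros b Hb.
      destruct (Htot z b) as [<-|[H|H]]; auto.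
      + exfalso; apply Hn; eauto.
      + exfalso; apply (Hzm b); auto. }
  assert (wfR : well_founded R0).
  { assert (S : forall a x, ap a x -> Acc R0 x).
    { intro a. induction a as [a IH] using (well_founded_ind Hwf).
      intros x Hax. constructor. intros u [a' [Ha' Hb]]. apply (IH a'); auto. }
    intro x. apply (S x x), aprefl. }
  set (R0r := brel R0).
  set (Qd := (fun Rs => exists s, P' s /\ rel_sim s R0r (Rs F1)) : quant Om (fun _ : Fin.t 1 => 2)).
  assert (hQ : Inv P (OQuant Qd)).
  { intros p Hp Rs Ss _ _ Hs. split.
    - intros [s [Hs0 Hs1]]. exists (compose s p). split; [apply Hcomp; auto|].
      intros t t'' Ht.
      destruct (choice_fun (fun i b => s (t i) b /\ p b (t'' i)) Ht) as [u Hu].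
      rewrite (Hs1 t u (fun i => proj1 (Hu i))). apply (Hs F1 u t'' (fun i => proj2 (Hu i))).
    - intros [s [Hs0 Hs1]]. exists (compose s (converse p)). split; [apply Hcomp; auto; apply Hconv; auto|].
      intros t t'' Ht.
      destruct (choice_fun (fun i b => s (t i) b /\ p (t'' i) b) Ht) as [u Hu].
      rewrite (Hs1 t u (fun i => proj1 (Hu i))). symmetry. apply (Hs F1 t'' u (fun i => proj2 (Hu i))). }
  pose proof (Hpi (OQuant Qd) hQ) as HQ. cbv beta iota in HQ.
  set (S := (fun t' => exists t, tup_rel pi t t' /\ R0r t) : rel Om 2).
  assert (IR0 : rel_inv (simq (Inv P)) R0r).
  { intros t t' Ht. unfold R0r, brel.
    assert (A1 : forall i, ap (t i) (t' i)) by (intro i; apply simap, Ht).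
    assert (A2 : forall i, ap (t' i) (t i)) by (intro i; apply apsym, A1).
    split; apply Rinv; auto. }
  assert (IS1 : forall t' u', tup_rel (simq (Inv P)) t' u' -> S t' -> S u').
  { intros t' u' Htu [t [Ht HRt]].
    destruct (choice_fun (fun i a => pi a (u' i)) (fun i => Hpr (u' i))) as [u Hu].
    exists u. split; [exact Hu|]. unfold R0r, brel in *.
    apply (Rinv (t F1_2) _ (t F2_2)); auto.
    - apply (proj2 (resp (t F1_2) (t' F1_2) (u F1_2) (u' F1_2) (Ht F1_2) (Hu F1_2))). apply simap, Htu.
    - apply (proj2 (resp (t F2_2) (t' F2_2) (u F2_2) (u' F2_2) (Ht F2_2) (Hu F2_2))). apply simap, Htu. }
  assert (IS : rel_inv (simq (Inv P)) S).
  { intros t' u' Htu. split; apply IS1; auto. intro i; apply simq_sym, Htu. }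
  assert (SR : rel_sim pi R0r S).
  { intros t t' Ht. split.
    - intro H. exists t. auto.
    - intros [u [Hu HRu]]. unfold R0r, brel in *.
      apply (Rinv (u F1_2) _ (u F2_2)); auto.
      + apply (proj2 (resp (u F1_2) (t' F1_2) (t F1_2) (t' F1_2) (Hu F1_2) (Ht F1_2))). apply aprefl.
      + apply (proj2 (resp (u F2_2) (t' F2_2) (t F2_2) (t' F2_2) (Hu F2_2) (Ht F2_2))). apply aprefl. }
  assert (HQs : Qd (fun _ => S)).
  { apply (HQ (fun _ => R0r) (fun _ => S)); auto.
    exists ap. split; [exact Hap|]. intros t t' Ht. unfold R0r, brel. split; apply Rinv; auto; apply Ht. }
  destruct HQs as [s [Hs Hs1]].
  destruct (simP s Hs) as [Hsl Hsr].
  set (tau := compose s (converse pi)).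
  assert (Htau : forall x y, tau x y -> ap x y).
  { apply (rigid Om ap R0 Rinv aprefl apsym irr tot wfR).
    - split.
      + intro x. destruct (Hsl x) as [c Hc]. destruct (Hpr c) as [y Hy]. exists y, c; auto.
      + intro y. destruct (Hpl y) as [c Hc]. destruct (Hsr c) as [x Hx]. exists x, c; auto.
    - intros x y x' y' [c [H1 H2]] [c' [H1' H2']].
      pose proof (Hs1 (tup2 x x') (tup2 c c') (tup_rel2 _ _ _ _ _ _ H1 H1')) as E1.
      pose proof (SR (tup2 y y') (tup2 c c') (tup_rel2 _ _ _ _ _ _ H2 H2')) as E2.
      unfold R0r in E1, E2. rewrite brel_tup2 in E1, E2. rewrite E1, E2. tauto. }
  apply (Hsubsim (compose ap s)).
  - apply Hcomp; auto.
  - split; auto.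
  - intros a b Hab. destruct (Hsr b) as [x Hx]. exists x. split; [|exact Hx].
    apply apsym, Htau. exists b. split; auto.
Qed.


Theorem theorem10 (Om : Type) (q : opset Om) (P : simset Om) (HP : sim_set P) :
  ((forall (l : nat) (ar : Fin.t l -> nat) (Q : quant Om ar),
      Inv (Sim q) (OQuant Q) <-> qdefinable q (restrictq q Q)) /\
   (forall (k : nat) (R : rel Om k),
      Inv (Sim q) (ORel R) <-> definable q R)) /\
  (sim_set (Sim (Inv P)) /\ full (Sim (Inv P)) /\
   (forall pi, P pi -> Sim (Inv P) pi) /\
   (forall P' : simset Om, sim_set P' -> full P' -> (forall pi, P pi -> P' pi) ->
      forall pi, Sim (Inv P) pi -> P' pi)).
Proof.
  split; [split|split; [|split; [|split]]].
  - intros l ar Q. apply part1_quant.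
  - intros k R. apply part1_rel.
  - intros pi [H _]. exact H.
  - apply Sim_full.
  - intros pi Hpi. apply P_sub_Sim; auto.
  - intros P' HP' HF Hs pi Hpi. apply (minimal_thm Om P HP P'); auto.
Qed.
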